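(* There exist (vertex-colored) graphs $G, H$ with a permutation equivariant filtration such that the forward persistence diagrams of $G$ and $H$ coincide in all degrees but their backward persistence diagrams differ. Similarly, there exist graphs $G,H$ with a permutation equivariant filtration such that their backward persistence diagrams coincide in all degrees but their forward persistence diagrams differ.
   Context: Graphs are finite, undirected, possibly with self-loops and multi-edges, regarded as topological spaces. A filtration function on $G=(V,E)$ is $f: V\cup E\to\mathbb{R}$ with $f(v),f(w)\le f(e)$ for each edge $e$ with endpoints $v,w$. With distinct values $a_0<\dots<a_n$, put $G_{-1}=\emptyset$, $G_i=f^{-1}((-\infty,a_i])$. The intermediate complex $\mathrm{IC}_i(G,f)$ consists of the vertices and edges of $G_i\setminus G_{i-1}$ together with the endpoints of those edges. For a sequence of spaces and maps, applying $H_k(-;\mathbb{Z}/2)$ gives a persistence module whose $k$-th persistence diagram is the multiset of intervals $(b,d)$ of its interval decomposition, indexed by positions in the sequence. Forward persistence: diagrams of $G_0\subset\dots\subset G_n$. Backward persistence: diagrams of $G\to G/\mathrm{IC}_n(G)\to (G/\mathrm{IC}_n(G))/( *\cup\mathrm{IC}_{n-1}(G))\to\dots\to\text{point}$, contracting $\mathrm{IC}_n,\dots,\mathrm{IC}_0$ in turn, where $*$ is the point to which all previously contracted pieces are collapsed, with quotient maps. A permutation equivariant filtration is a rule assigning to each (possibly vertex-colored) graph $G$ a filtration function $f_G$ such that $f_H\circ\varphi=f_G$ for every (color-preserving) graph isomorphism $\varphi:G\to H$ (e.g. vertex-color filtrations, degree filtration). *)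

(* Defs.v *)
From HB Require Import structures.
From mathcomp Require Import all_boot all_order all_algebra.
From mathcomp Require Import reals.
Set Implicit Arguments. Unset Strict Implicit. Unset Printing Implicit Defensive.
Import Order.TTheory GRing.Theory Num.Theory.
Local Open Scope ring_scope.

(* Finite vertex-colored multigraphs (self-loops and multi-edges        *)
(* allowed).  An edge e has (unordered) endpoints (gends e).1,          *)
(* (gends e).2; the order of the pair is irrelevant everywhere below.   *)
(* Colors are natural numbers (an uncolored graph = constant coloring). *)
Record cgraph := CGraph {
  gV : finType;
  gE : finType;
  gends : gE -> gV * gV;
  gcol : gV -> nat }.
Arguments gends : clear implicits.
Arguments gcol : clear implicits.

Definition cell (G : cgraph) := (gV G + gE G)%type.

Definition is_filtration (R : realType) (G : cgraph) (f : cell G -> R) :=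
  forall e : gE G, f (inl (gends G e).1) <= f (inr e) /\
                   f (inl (gends G e).2) <= f (inr e).

Definition giso (G H : cgraph) (phV : gV G -> gV H) (phE : gE G -> gE H) :=
  [/\ bijective phV, bijective phE,
      (forall e, gends H (phE e) = (phV (gends G e).1, phV (gends G e).2) \/
                 gends H (phE e) = (phV (gends G e).2, phV (gends G e).1))
    & (forall v, gcol H (phV v) = gcol G v)].

Definition equivariant_filtration (R : realType)
    (F : forall G : cgraph, cell G -> R) :=
  (forall G, is_filtration (F G)) /\
  (forall G H phV phE, @giso G H phV phE ->
     (forall v, F H (inl (phV v)) = F G (inl v)) /\
     (forall e, F H (inr (phE e)) = F G (inr e))).

(* Cellular Z/2 homology of sub-quotients S/A of G (S, A subcomplexes,  *)
(* A <= S), where S/A is the graph obtained from S by collapsing A to a *)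
(* single point * (S/A = S when A is empty).  Vertices of S/A live in   *)
(* option (gV G) (None = the point * ), edges of S/A are edges of G.    *)
Section Homology.
Variable G : cgraph.
Local Notation V := (gV G).
Local Notation E := (gE G).
Local Notation F2 := 'F_2.

Definition scx := (pred V * pred E)%type.
Definition scx_full : scx := (fun _ => true, fun _ => true).
Definition scx_empty : scx := (fun _ => false, fun _ => false).

Definition mxOf (T U : finType) (P : T -> U -> nat) : 'M[F2]_(#|T|, #|U|) :=
  \matrix_(i, j) (P (enum_val i) (enum_val j))%:R.

Definition diagp (T : finType) (p : pred T) : 'M[F2]_#|T| :=
  mxOf (fun x y : T => ((x == y) && p x) : nat).

Definition qinV (S A : scx) (x : option V) : bool :=
  match x with None => [exists v, A.1 v] | Some v => S.1 v && ~~ A.1 v end.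
Definition qinE (S A : scx) (e : E) : bool := S.2 e && ~~ A.2 e.
Definition qproj (A : scx) (v : V) : option V := if A.1 v then None else Some v.
Definition qends (A : scx) (e : E) : option V * option V :=
  (qproj A (gends G e).1, qproj A (gends G e).2).

(* cellular chain groups (as row spaces) and boundary over Z/2 *)
Definition C0 (S A : scx) := diagp (qinV S A).
Definition C1 (S A : scx) := diagp (qinE S A).
Definition bdry (A : scx) : 'M[F2]_(#|E|, #|{: option V}|) :=
  mxOf (fun e x => (((qends A e).1 == x) : nat) + (((qends A e).2 == x) : nat))%N.
Definition Z1 (S A : scx) := (C1 S A :&: kermx (bdry A))%MS.   (* = H_1 *)
Definition B0 (S A : scx) := (C1 S A *m bdry A)%MS.            (* H_0 = C0/B0 *)

(* chain map of the cellular map S/A -> S'/A' (S <= S', A <= A') induced by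
   the identity of G: vertices/edges in A' go to the point * *)
Definition qmapV (A' : scx) (x : option V) : option V :=
  if x is Some v then qproj A' v else None.
Definition F0 (A' : scx) : 'M[F2]_#|{: option V}| :=
  mxOf (fun x y => (qmapV A' x == y) : nat).
Definition F1 (A' : scx) : 'M[F2]_#|E| :=
  mxOf (fun e e' => ((e == e') && ~~ A'.2 e) : nat).

(* rank of the induced map H_k(S/A; Z/2) -> H_k(S'/A'; Z/2) *)
Definition hrank (k : nat) (SA SA' : scx * scx) : nat :=
  let: (S1, A1) := SA in let: (S2, A2) := SA' in
  match k with
  | 0 => (\rank (C0 S1 A1 *m F0 A2 + B0 S2 A2)%MS - \rank (B0 S2 A2))%N
  | 1 => \rank (Z1 S1 A1 *m F1 A2)
  | _ => 0%N
  end.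

(* Persistence diagram of H_k applied to a sequence X_0 -> ... -> X_{L-1}
   of sub-quotients (maps induced by identity of G): the multiplicity of
   the interval [b, d] (0 <= b <= d <= L-1) in the interval decomposition,
   computed from the rank invariant r(b,d) = rank(H_k X_b -> H_k X_d). *)
Definition rkz (L : nat) (sp : nat -> scx * scx) (k b d : nat) : int :=
  if (b <= d < L)%N then (hrank k (sp b) (sp d))%:Z else 0.
Definition pdiag (L : nat) (sp : nat -> scx * scx) (k : nat) (b d : nat) : int :=
  if (b <= d < L)%N then
    rkz L sp k b d - (if b is b'.+1 then rkz L sp k b' d else 0)
    - rkz L sp k b d.+1 + (if b is b'.+1 then rkz L sp k b' d.+1 else 0)
  else 0.

Variable R : realType.
Variable f : cell G -> R.

(* distinct values a_0 < ... < a_n ; N = n + 1 *)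
Definition fvals : seq R := sort <=%R (undup [seq f c | c : cell G]).
Definition nlev : nat := size fvals.
Definition aval (i : nat) : R := nth 0 fvals i.

Definition inGi (i : nat) (c : cell G) : bool := f c <= aval i.
Definition Gi (i : nat) : scx := (fun v => inGi i (inl v), fun e => inGi i (inr e)).
(* G_{i-1}, with G_{-1} = empty *)
Definition inGprev (i : nat) (c : cell G) : bool :=
  if i is i'.+1 then inGi i' c else false.
Definition newcell (i : nat) (c : cell G) : bool := inGi i c && ~~ inGprev i c.
Definition IC (i : nat) : scx :=
  (fun v => newcell i (inl v) ||
            [exists e, newcell i (inr e) &&
                       (((gends G e).1 == v) || ((gends G e).2 == v))],
   fun e => newcell i (inr e)).
(* A_j = IC_n u IC_{n-1} u ... u IC_{n-j+1}  (A_0 empty, A_{n+1} = G) *)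
Definition Acontr (j : nat) : scx :=
  (fun v => [exists i : 'I_nlev, (nlev - j <= i)%N && (IC i).1 v],
   fun e => [exists i : 'I_nlev, (nlev - j <= i)%N && (IC i).2 e]).

(* Forward: G_0 -> ... -> G_n (positions 0..n). *)
Definition fwdPD (k : nat) : nat -> nat -> int :=
  pdiag nlev (fun i => (Gi i, scx_empty)) k.
(* Backward: G = G/A_0 -> G/A_1 -> ... -> G/A_{n+1} = point (positions 0..n+1). *)
Definition bwdPD (k : nat) : nat -> nat -> int :=
  pdiag nlev.+1 (fun j => (scx_full, Acontr j)) k.

End Homology.

Definition same_fwd (R : realType) (G H : cgraph) (fG : cell G -> R) (fH : cell H -> R) :=
  forall k b d : nat, fwdPD fG k b d = fwdPD fH k b d.
Definition same_bwd (R : realType) (G H : cgraph) (fG : cell G -> R) (fH : cell H -> R) :=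
  forall k b d : nat, bwdPD fG k b d = bwdPD fH k b d.

(* Main.v *)
Require Import Defs.
From mathcomp Require Import all_boot all_order all_algebra reals.
From mathcomp Require Import zify.
From Stdlib Require Import FunctionalExtensionality.
Set Implicit Arguments. Unset Strict Implicit. Unset Printing Implicit Defensive.
Import Order.TTheory GRing.Theory Num.Theory.
Local Open Scope ring_scope.

Section LA.
Variable T : finType.
Local Notation F2 := 'F_2.

Lemma natbool_F2 (b : bool) : ((b : nat)%:R : F2) = if b then 1 else 0.
Proof. by case: b. Qed.

Lemma row_diagp (p : pred T) i :
  row i (diagp p) = if p (enum_val i) then delta_mx 0 i else 0.
Proof.
apply/rowP => j; rewrite !mxE (inj_eq enum_val_inj) natbool_F2.
by case: (p _); rewrite ?mxE ?andbT ?andbF //= eq_sym; case: (j == i).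
Qed.

Lemma delta_sub_diagp (p : pred T) i :
  p (enum_val i) -> (delta_mx (0 : 'I_1) i <= diagp p)%MS.
Proof.
move=> pi; have <- : row i (diagp p) = delta_mx 0 i by rewrite row_diagp pi.
exact: row_sub.
Qed.

Lemma sub_diagp_col m (A : 'M[F2]_(m, #|T|)) (p : pred T) y :
  (A <= diagp p)%MS -> ~~ p y -> forall i, A i (enum_rank y) = 0.
Proof.
case/submxP => W -> npy i; rewrite mxE big1 // => k _.
rewrite mxE enum_rankK natbool_F2.
by case: eqP => [->|]; rewrite ?(negbTE npy) /= ?mulr0.
Qed.

Lemma diagp0 (p : pred T) : (forall x, p x = false) -> diagp p = 0.
Proof. by move=> p0; apply/matrixP => i j; rewrite !mxE p0 andbF. Qed.

Lemma diagpT (p : pred T) : (forall x, p x) -> diagp p = 1%:M.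
Proof.
by move=> p1; apply/matrixP => i j; rewrite !mxE p1 andbT (inj_eq enum_val_inj) natbool_F2; case: (i == j).
Qed.

Lemma rank_diagp (p : pred T) : \rank (diagp p) = #|p|.
Proof.
move: {2}#|p| (erefl #|p|) => k; elim: k p => [|k IH] p Hp.
  rewrite diagp0 ?mxrank0 // => x; apply/negbTE.
  by rewrite -[p x]/(x \in p) (card0_eq Hp).
have [x px] : exists x, p x.
  have : (0 < #|p|)%N by rewrite Hp.
  by case/card_gt0P => x px; exists x.
pose p' := [pred y | (y != x) && p y].
have Hp' : #|p'| = k.
  by move: Hp; rewrite (cardD1 x) [x \in p]px add1n => -[].
have rk' := IH p' Hp'.
pose D' := diagp p'; pose d : 'rV['F_2]_#|T| := delta_mx (0:'I_1) (enum_rank x).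
have nd : ~~ (d <= D')%MS.
  apply/negP => /sub_diagp_col => /(_ x); rewrite /p' /= eqxx /= => /(_ isT 0).
  by rewrite mxE !eqxx /= => /eqP; rewrite oner_eq0.
have eqD : (diagp p == D' + d)%MS.
  apply/andP; split.
    apply/row_subP => i; rewrite row_diagp; case: ifP => pi; last exact: sub0mx.
    case: (eqVneq (enum_val i) x) => [ex|nx].
      by apply: submx_trans (addsmxSr D' d); rewrite /d -ex enum_valK.
    by apply: submx_trans (addsmxSl D' d); apply: delta_sub_diagp; rewrite /p' /= nx pi.
  rewrite addsmx_sub; apply/andP; split.
    apply/row_subP => i; rewrite row_diagp /p' /=; case: ifP => [/andP[_ pi]|_].
      exact: delta_sub_diagp.
    exact: sub0mx.
  by apply: delta_sub_diagp; rewrite enum_rankK.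
rewrite (eqmx_rank eqD).
have [le _] := mxrank_adds_leqif D' d.
rewrite mxrank_delta in le.
have [le2 eq2] := mxrank_leqif_sup (addsmxSl D' d).
have neq : \rank D' != \rank (D' + d).
  rewrite eq2; apply: contra nd => H; exact: submx_trans (addsmxSr D' d) H.
rewrite Hp; move: le le2 neq; rewrite /D' rk' Hp'; lia.
Qed.
End LA.

Local Notation F2 := 'F_2.
Lemma row_mxOf_fun (T U : finType) (g : T -> U) i :
  row i (mxOf (fun x y => (g x == y) : nat)) =
  delta_mx (0 : 'I_1) (enum_rank (g (enum_val i))).
Proof.
apply/rowP => j; rewrite !mxE natbool_F2 /=; case: eqP => [e|ne].
  by rewrite e enum_valK eqxx.
by case: eqP => // ej; case: ne; rewrite ej enum_rankK.
Qed.

Lemma rank_img (T U : finType) (p : pred T) (g : T -> U) (q : pred U) :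
  (forall x, p x -> q (g x)) -> (forall y, q y -> exists2 x, p x & g x = y) ->
  \rank (diagp p *m mxOf (fun x y => (g x == y) : nat)) = #|q|.
Proof.
move=> H1 H2; rewrite -(rank_diagp q); apply/eqmx_rank/andP; split.
  apply/row_subP => i; rewrite row_mul row_diagp; case: ifP => pi.
    rewrite -rowE row_mxOf_fun; apply: delta_sub_diagp.
    by rewrite enum_rankK; apply: H1.
  by rewrite mul0mx sub0mx.
apply/row_subP => j; rewrite row_diagp; case: ifP => qj; last exact: sub0mx.
have [x px gx] := H2 _ qj.
have <- : row (enum_rank x) (diagp p *m mxOf (fun x y => (g x == y) : nat)) =
          delta_mx 0 j.
  by rewrite row_mul row_diagp enum_rankK px -rowE row_mxOf_fun enum_rankK gx enum_valK.
exact: row_sub.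
Qed.

Lemma mxOf_id (T : finType) : mxOf (fun x y : T => (x == y) : nat) = 1%:M.
Proof.
by apply/matrixP => i j; rewrite !mxE (inj_eq enum_val_inj) natbool_F2; case: (i == j).
Qed.

Section Hom.
Variable G : cgraph.

Lemma exists_false : [exists v : gV G, false] = false.
Proof. by apply/existsP => -[]. Qed.

Lemma F0_empty : F0 (scx_empty G) = 1%:M.
Proof.
rewrite /F0 -(mxOf_id (option (gV G))); apply/matrixP => i j; rewrite !mxE.
by case: (enum_val i).
Qed.

Lemma qinV_empty (S : scx G) x :
  qinV S (scx_empty G) x = if x is Some v then S.1 v else false.
Proof. by case: x => [v|] /=; rewrite ?andbT ?exists_false. Qed.

Lemma card_qinV_empty (S : scx G) : #|qinV S (scx_empty G)| = #|S.1|.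
Proof.
have sinj : injective (@Some (gV G)) by move=> ? ? [].
rewrite -(card_image sinj); apply: eq_card => y.
rewrite [y \in qinV _ _]unfold_in.
case: y => [v|] /=; first by rewrite andbT (mem_map sinj) mem_enum.
by rewrite exists_false; apply/esym/mapP => -[].
Qed.

Lemma hrank0_noedge (S1 A1 S2 A2 : scx G) (q : pred (option (gV G))) :
  (forall e, qinE S2 A2 e = false) ->
  (forall x, qinV S1 A1 x -> q (qmapV A2 x)) ->
  (forall y, q y -> exists2 x, qinV S1 A1 x & qmapV A2 x = y) ->
  hrank 0 (S1, A1) (S2, A2) = #|q|.
Proof.
move=> hE H1 H2; rewrite /hrank /B0 /C1 diagp0 // mul0mx mxrank0 subn0 addsmx0.
exact: rank_img.
Qed.

Lemma hrank1_noedge (S1 A1 : scx G) x :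
  (forall e, qinE S1 A1 e = false) -> hrank 1 (S1, A1) x = 0%N.
Proof.
case: x => S2 A2 hE; rewrite /hrank; apply/eqP; rewrite -leqn0.
apply: leq_trans (mxrankM_maxl _ _) _; rewrite /Z1 /C1 diagp0 //.
by apply: leq_trans (mxrankS (capmxSl _ _)) _; rewrite mxrank0.
Qed.

Lemma hrank0_vertices (S : scx G) :
  (forall e, S.2 e = false) -> hrank 0 (S, scx_empty G) (S, scx_empty G) = #|S.1|.
Proof.
move=> hE; rewrite -card_qinV_empty; apply: hrank0_noedge.
- by move=> e; rewrite /qinE hE.
- by case.
- by move=> y qy; exists y => //; case: y qy.
Qed.
End Hom.

Definition va : 'I_3 := @Ordinal 3 0 isT.
Definition vb : 'I_3 := @Ordinal 3 1 isT.
Definition vc : 'I_3 := @Ordinal 3 2 isT.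
Definition cg (c : 'I_3 -> nat) : cgraph :=
  @CGraph (ordinal 3) unit (fun _ => (vb, vc)) c.

Lemma hrank0_edge c (S1 : scx (cg c)) : S1.1 vc = false ->
  hrank 0 (S1, scx_empty _) (scx_full _, scx_empty _) = #|S1.1|.
Proof.
move=> Sc; rewrite /hrank /B0 /C1 /C0 F0_empty mulmx1 (@diagpT _ (qinE _ _)) // mul1mx.
rewrite -(card_qinV_empty S1) -(rank_diagp (qinV S1 _)).
set D := diagp _; set B := bdry _.
have Bent : B (enum_rank tt) (enum_rank (Some vc)) = 1.
  by rewrite /B /bdry mxE !enum_rankK.
have rB : \rank B = 1%N.
  apply/eqP; rewrite eqn_leq; apply/andP; split.
    by apply: leq_trans (rank_leq_row B) _; rewrite card_unit.
  rewrite lt0n mxrank_eq0; apply/eqP => B0.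
  by move: Bent; rewrite B0 mxE => /eqP; rewrite eq_sym oner_eq0.
have nBD : ~~ (B <= D)%MS.
  apply/negP => /sub_diagp_col => /(_ (Some vc)).
  rewrite /= Sc /= => /(_ isT (enum_rank tt)); rewrite Bent => /eqP.
  by rewrite oner_eq0.
have [le _] := mxrank_adds_leqif D B.
have [le2 eq2] := mxrank_leqif_sup (addsmxSl D B).
have neq : \rank D != \rank (D + B).
  rewrite eq2; apply: contra nBD => H; exact: submx_trans (addsmxSr D B) H.
rewrite rB in le.
have e : \rank (D + B) = (\rank D).+1.
  apply/eqP; rewrite eqn_leq; apply/andP; split.
    by apply: leq_trans le _; rewrite addn1.
  by rewrite ltn_neqAle neq le2.
by rewrite rB e subn1.
Qed.

Definition lvl (G : cgraph) (x : cell G) : nat :=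
  match x with
  | inl v => gcol G v
  | inr e => maxn (gcol G (gends G e).1) (gcol G (gends G e).2)
  end.
Definition Fil (R : realType) (G : cgraph) (x : cell G) : R := (lvl x)%:R.

Lemma Fil_equiv (R : realType) : equivariant_filtration (@Fil R).
Proof.
split.
  by move=> G e; rewrite /Fil /= !ler_nat leq_maxl leq_maxr.
move=> G H phV phE [_ _ hE hc]; split => [v|e]; first by rewrite /Fil /= hc.
rewrite /Fil /=; case: (hE e) => ->; rewrite /= !hc //.
by rewrite maxnC.
Qed.

Lemma fvals01 (R : realType) (G : cgraph) (f : cell G -> R) (l : cell G -> nat) :
  (forall x, f x = (l x)%:R) -> (forall x, (l x <= 1)%N) ->
  (exists x, l x = 0%N) -> (exists x, l x = 1%N) -> fvals f = [:: 0; 1].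
Proof.
move=> hf hl [x0 h0] [x1 h1]; rewrite /fvals; apply: lt_sorted_eq.
- by rewrite sort_lt_sorted undup_uniq.
- by rewrite /= andbT ltr01.
move=> y; rewrite mem_sort mem_undup !inE; apply/mapP/idP.
  case=> x _ ->; rewrite hf; move: (hl x); case: (l x) => [|[|//]] _.
    by rewrite mulr0n eqxx.
  by rewrite mulr1n eqxx orbT.
case/orP => /eqP ->.
  by exists x0; rewrite ?mem_enum // hf h0 mulr0n.
by exists x1; rewrite ?mem_enum // hf h1 mulr1n.
Qed.

Lemma ex_ord_has n (P : nat -> bool) : [exists i : 'I_n, P i] = has P (iota 0 n).
Proof.
apply/existsP/hasP => [[i Pi]|[k]].
  by exists (val i); rewrite ?mem_iota ?ltn_ord.
by rewrite mem_iota add0n => /andP[_ kn] Pk; exists (Ordinal kn).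
Qed.

Lemma ex_unit (P : pred unit) : [exists e, P e] = P tt.
Proof. by apply/existsP/idP => [[[]]|]; last exists tt. Qed.

Section Conc.
Variable R : realType.
Variable c : 'I_3 -> nat.
Hypothesis Hc : forall v, (c v <= 1)%N.
Hypothesis Hc0 : exists v, c v = 0%N.
Hypothesis Hc1 : c vc = 1%N.
Local Notation f := (@Fil R (cg c)).

Lemma lvl_le1 (x : cell (cg c)) : (lvl x <= 1)%N.
Proof. by case: x => [v|e] /=; rewrite ?geq_max !Hc. Qed.

Lemma fvals_c : fvals f = [:: 0; 1].
Proof.
apply: (fvals01 (l := @lvl (cg c))) => //; first exact: lvl_le1.
  by case: Hc0 => v hv; exists (inl v).
by exists (inl vc).
Qed.

Lemma nlev2 : nlev f = 2%N.
Proof. by rewrite /nlev fvals_c. Qed.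

Lemma inGi0 x : inGi f 0 x = (lvl x == 0%N).
Proof. by rewrite /inGi /aval fvals_c /= /Fil lern0. Qed.

Lemma inGi1 x : inGi f 1 x = true.
Proof. by rewrite /inGi /aval fvals_c /= /Fil lern1 lvl_le1. Qed.

Lemma edge_lvl (e : unit) : lvl (G:=cg c) (inr e) = 1%N.
Proof. by rewrite /= Hc1; apply/maxn_idPr/Hc. Qed.

Lemma Gi0 : Gi f 0 = ((fun v => c v == 0%N), (fun _ => false)).
Proof.
rewrite /Gi; congr pair; apply: functional_extensionality => x.
  by rewrite inGi0.
by rewrite inGi0 edge_lvl.
Qed.

Lemma Gi1 : Gi f 1 = scx_full _.
Proof.
by rewrite /Gi; congr pair; apply: functional_extensionality => x; rewrite inGi1.
Qed.

Lemma newcell0 x : newcell f 0 x = (lvl x == 0%N).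
Proof. by rewrite /newcell inGi0 /= andbT. Qed.

Lemma newcell1 x : newcell f 1 x = (lvl x != 0%N).
Proof. by rewrite /newcell /inGprev inGi1 inGi0. Qed.

Lemma Acontr_eq j : Acontr f j =
  ((fun v => ((2 - j <= 0)%N && (IC f 0).1 v) || ((2 - j <= 1)%N && (IC f 1).1 v)),
   (fun e => ((2 - j <= 0)%N && (IC f 0).2 e) || ((2 - j <= 1)%N && (IC f 1).2 e))).
Proof.
rewrite /Acontr; congr pair; apply: functional_extensionality => x.
  by rewrite (ex_ord_has _ (fun i : nat => (nlev f - j <= i)%N && (IC f i).1 x)) nlev2 /= orbF.
by rewrite (ex_ord_has _ (fun i : nat => (nlev f - j <= i)%N && (IC f i).2 x)) nlev2 /= orbF.
Qed.

Lemma Acontr0 : Acontr f 0 = scx_empty _.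
Proof. by rewrite Acontr_eq. Qed.

Lemma Acontr1 : Acontr f 1 =
  ((fun v => (c v != 0%N) || (vb == v) || (vc == v)), (fun _ => true)).
Proof.
rewrite Acontr_eq /=; congr pair; apply: functional_extensionality => x.
  by rewrite /IC /= newcell1 ex_unit newcell1 edge_lvl /= orbA.
by rewrite /IC /= newcell1 edge_lvl.
Qed.

Lemma Acontr2 j : (2 <= j)%N -> Acontr f j = scx_full _.
Proof.
move=> hj; rewrite Acontr_eq; have -> : (2 - j = 0)%N by apply/eqP; rewrite subn_eq0.
rewrite /=; congr pair; apply: functional_extensionality => x.
  by rewrite /IC /= newcell0 newcell1; case: (_ == 0%N); rewrite ?orbT.
by rewrite /IC /= newcell0 newcell1; case: (_ == _).
Qed.
End Conc.

Lemma hrank_cg c c' k x y : @hrank (cg c) k x y = @hrank (cg c') k x y.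
Proof. by []. Qed.

Lemma pdiag_ext (G H : cgraph) L (sp : nat -> scx G * scx G)
    (sp' : nat -> scx H * scx H) k :
  (forall b d, (b <= d < L)%N -> hrank k (sp b) (sp d) = hrank k (sp' b) (sp' d)) ->
  forall b d, pdiag L sp k b d = pdiag L sp' k b d.
Proof.
move=> h.
have r : forall b d, rkz L sp k b d = rkz L sp' k b d.
  by move=> b d; rewrite /rkz; case: ifP => // /h ->.
by move=> b d; rewrite /pdiag; case: b => [|b]; rewrite !r.
Qed.

Lemma ord3_ind (P : 'I_3 -> Prop) : P va -> P vb -> P vc -> forall v, P v.
Proof.
move=> pa pb pc [[|[|[|n]]] h].
- by have -> : Ordinal h = va by apply: val_inj.
- by have -> : Ordinal h = vb by apply: val_inj.
- by have -> : Ordinal h = vc by apply: val_inj.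
- by [].
Qed.

Definition col1 (v : 'I_3) : nat := nth 0%N [:: 0; 1; 1]%N v.
Definition col2 (v : 'I_3) : nat := nth 0%N [:: 1; 0; 1]%N v.
Definition col3 (v : 'I_3) : nat := nth 0%N [:: 0; 0; 1]%N v.

Lemma c1le v : (col1 v <= 1)%N. Proof. by elim/ord3_ind: v. Qed.
Lemma c2le v : (col2 v <= 1)%N. Proof. by elim/ord3_ind: v. Qed.
Lemma c3le v : (col3 v <= 1)%N. Proof. by elim/ord3_ind: v. Qed.
Lemma c1z : exists v, col1 v = 0%N. Proof. by exists va. Qed.
Lemma c2z : exists v, col2 v = 0%N. Proof. by exists vb. Qed.
Lemma c3z : exists v, col3 v = 0%N. Proof. by exists va. Qed.

Lemma card_c1 : #|(fun v => col1 v == 0%N)| = 1%N.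
Proof. by apply: etrans (card1 va); apply: eq_card; elim/ord3_ind. Qed.
Lemma card_c2 : #|(fun v => col2 v == 0%N)| = 1%N.
Proof. by apply: etrans (card1 vb); apply: eq_card; elim/ord3_ind. Qed.
Lemma card_c3 : #|(fun v => col3 v == 0%N)| = 2%N.
Proof. by apply: etrans (card2 va vb); apply: eq_card; elim/ord3_ind. Qed.

Arguments hrank : simpl never.

Lemma c1v : col1 vc = 1%N. Proof. by []. Qed.
Lemma c2v : col2 vc = 1%N. Proof. by []. Qed.
Lemma c3v : col3 vc = 1%N. Proof. by []. Qed.

Theorem proposition1 (R : realType) :
  (exists F : forall G : cgraph, cell G -> R,
     equivariant_filtration F /\
     exists G H : cgraph, same_fwd (F G) (F H) /\ ~ same_bwd (F G) (F H)) /\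
  (exists F : forall G : cgraph, cell G -> R,
     equivariant_filtration F /\
     exists G H : cgraph, same_bwd (F G) (F H) /\ ~ same_fwd (F G) (F H)).
Proof.
have n1 := nlev2 R c1le c1z c1v.
have n2 := nlev2 R c2le c2z c2v.
have n3 := nlev2 R c3le c3z c3v.
split; exists (@Fil R); (split; first exact: Fil_equiv).
- exists (cg col1), (cg col2); split.
  + move=> k b d; rewrite /fwdPD n1 n2; apply: pdiag_ext => {b d} b d /andP[hb hd].
    case: d hd hb => [|[|//]] _.
      case: b => [|//] _; rewrite (Gi0 R c1le c1z c1v) (Gi0 R c2le c2z c2v).
      case: k => [|[|k]] //.
        by rewrite !hrank0_vertices // card_c1 card_c2.
    case: b => [|[|//]] _.
      rewrite (Gi0 R c1le c1z c1v) (Gi0 R c2le c2z c2v).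
      rewrite (Gi1 R c1le c1z c1v) (Gi1 R c2le c2z c2v).
      case: k => [|[|k]] //.
        by rewrite !hrank0_edge // card_c1 card_c2.
    rewrite (Gi1 R c1le c1z c1v) (Gi1 R c2le c2z c2v).
    exact: hrank_cg.
  + move=> Hs; move: (Hs 0%N 0%N 0%N); rewrite /bwdPD n1 n2 /pdiag /rkz /=.
    rewrite (Acontr0 R c1le c1z c1v) (Acontr0 R c2le c2z c2v).
    rewrite (Acontr1 R c1le c1z c1v) (Acontr1 R c2le c2z c2v).
    rewrite (@hrank_cg col2 col1 0%N (scx_full _, scx_empty _)).
    rewrite (@hrank0_noedge (cg col1) _ _ _ ((fun v : 'I_3 => (col1 v != 0%N) || (vb == v) || (vc == v)), (fun _ : unit => true)) (pred2 (Some va) None)); first last.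
    * move=> y /pred2P [->|->]; [exists (Some va) | exists (Some vb)] => //.
    * move=> x; rewrite qinV_empty; case: x => // v _; elim/ord3_ind: v => //.
    * by [].
    rewrite (@hrank0_noedge (cg col2) _ _ _ ((fun v : 'I_3 => (col2 v != 0%N) || (vb == v) || (vc == v)), (fun _ : unit => true)) (pred1 None)); first last.
    * by move=> y /eqP ->; exists (Some va).
    * move=> x; rewrite qinV_empty; case: x => // v _; elim/ord3_ind: v => //.
    * by [].
    rewrite card1 card2 /=.
    have ar : forall a b : nat, (a%:Z - 0 - 2%:Z + 0 = b%:Z - 0 - 1%:Z + 0)%R -> a = b -> False.
      by move=> a b; lia.
    by move/ar; apply; exact: hrank_cg.
- exists (cg col3), (cg col1); split.
  + move=> k b d; rewrite /bwdPD n3 n1; apply: pdiag_ext => {b d} b d /andP[hb hd].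
    have ac : forall j, (j < 3)%N -> Acontr (@Fil R (cg col3)) j = Acontr (@Fil R (cg col1)) j.
      case=> [|[|[|//]]] _.
      * by rewrite (Acontr0 R c3le c3z c3v) (Acontr0 R c1le c1z c1v).
      * rewrite (Acontr1 R c3le c3z c3v) (Acontr1 R c1le c1z c1v); congr pair.
        by apply: functional_extensionality; elim/ord3_ind.
      * by rewrite (Acontr2 R c3le c3z c3v) // (Acontr2 R c1le c1z c1v).
    rewrite !ac //; last exact: leq_ltn_trans hd.
  + move=> Hs; move: (Hs 0%N 0%N 1%N); rewrite /fwdPD n3 n1 /pdiag /rkz /=.
    rewrite (Gi0 R c3le c3z c3v) (Gi0 R c1le c1z c1v).
    rewrite (Gi1 R c3le c3z c3v) (Gi1 R c1le c1z c1v).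
    by rewrite !hrank0_edge // card_c1 card_c3.
Qed.
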